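(* Let $G=(V,E)$ be a connected graph with $n$ nodes and let $G'=(V,E\cup \beta)$ be the modified graph after the insertion of a batch $\beta$ of edges. Let $S$ be a set of $r$ shortest paths of $G$ sampled according to $\pi_{G}$, with $r=\frac{c}{\epsilon^{2}}\left(\lfloor\log_{2}\left(VD(G)-2\right)\rfloor+1+\ln\frac{1}{\delta}\right)$ for some constants $\epsilon,\delta\in(0,1)$. Then, if a new set $S'$ of shortest paths of $G'$ is built according to procedure $\mathcal{P}$ and the approximated betweenness centrality $\tilde{c}'_B(v)$ of each node $v$ is computed as the fraction of paths of $S'$ that $v$ is internal to, then \[ \Pr(\exists v\in V\ \text{s.t.}\ |c'_{B}(v)-\tilde{c}'_B(v)|>\epsilon)<\delta, \] where $c'_{B}(v)$ is the new exact value of betweenness centrality of $v$ after the edge insertions.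
   Context: For a graph with $n$ nodes, $\sigma_{st}$ denotes the number of shortest paths from $s$ to $t$ and $\sigma_{st}(v)$ the number of those passing through $v$; the (normalized) betweenness centrality is $c_B(v)=\frac{1}{n(n-1)}\sum_{s\neq v\neq t}\frac{\sigma_{st}(v)}{\sigma_{st}}$. The sampling distribution $\pi_G$ assigns to each shortest path $p_{st}$ of $G$ the probability $\pi_G(p_{st})=\frac{1}{n(n-1)}\cdot\frac{1}{\sigma_{st}}$ of being chosen in each of the $r$ independent sampling iterations (choose an ordered node pair $(s,t)$ uniformly at random, then a shortest $s$–$t$ path uniformly at random). $VD(G)$ is the vertex diameter of $G$ (number of nodes on a shortest path of $G$ with the maximum number of nodes), or an upper bound on it that cannot increase under edge insertions in a connected graph; $c\approx 0.5$ is a universal constant. Procedure $\mathcal{P}$: for each sampled path $p_{st}\in S$, keep it ($p'_{st}=p_{st}$) if the new distance $d'_s(t)$ equals the old distance $d_s(t)$ and the new number of shortest paths $\sigma'_{st}$ equals $\sigma_{st}$; otherwise replace it by a path $p'_{st}$ chosen uniformly at random among the set of shortest $s$–$t$ paths in $G'$. *)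

(* Defs.v *)
From HB Require Import structures.
From mathcomp Require Import all_boot all_order all_algebra.
From mathcomp Require Import all_classical all_reals all_analysis.
Set Implicit Arguments. Unset Strict Implicit. Unset Printing Implicit Defensive.
Import Order.TTheory GRing.Theory Num.Theory.
Local Open Scope ring_scope.

Section Graphs.
Variable T : finType.

Definition simple_graph (e : rel T) : Prop := symmetric e /\ irreflexive e.
Definition connected_graph (e : rel T) : Prop := forall s t : T, connect e s t.

(* w is the tail of a walk s = w_0, w_1, ..., w_k = t *)
Definition walk_of (e : rel T) (s t : T) (w : seq T) : bool :=
  path e s w && (last s w == t).

Definition has_walk (e : rel T) (s t : T) (k : nat) : bool :=
  [exists w : k.-tuple T, walk_of e s t w].

(* d_s(t): least number of edges of an s-t walk (= #|T| if none exists). *)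
Definition dist (e : rel T) (s t : T) : nat :=
  find (has_walk e s t) (iota 0 #|T|).

Definition spaths (e : rel T) (s t : T) : seq (seq T) :=
  [seq s :: tval w | w <- enum [pred w : (dist e s t).-tuple T | walk_of e s t w]].

Definition sigma (e : rel T) (s t : T) : nat := size (spaths e s t).

Definition internal (v : T) (p : seq T) : bool :=
  [&& v \in p, v != head v p & v != last v p].

Definition sigmav (e : rel T) (s t v : T) : nat :=
  count (internal v) (spaths e s t).

Definition betweenness {R : realType} (e : rel T) (v : T) : R :=
  ((#|T| * (#|T| - 1))%:R)^-1 *
  \sum_(s : T | s != v) \sum_(t : T | (t != v) && (t != s))
     (sigmav e s t v)%:R / (sigma e s t)%:R.

Definition VD (e : rel T) : nat := \max_(s : T) \max_(t : T) (dist e s t).+1.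

Definition ordered_pairs : seq (T * T) :=
  [seq st <- [seq (s, t) | s <- enum T, t <- enum T] | st.1 != st.2].

(* One iteration of sampling + procedure P, with its explicit randomness:
   an ordered pair (s,t), s <> t, uniformly; a shortest s-t path p of G
   uniformly; and (independently) a shortest s-t path q of G' uniformly,
   used as the replacement when p is not kept.  Each outcome is listed
   with its probability and the resulting path p'_st of S'. *)
Definition step_outcomes {R : realType} (e e' : rel T) : seq (R * seq T) :=
  flatten [seq flatten [seq [seq
      (((#|T| * (#|T| - 1))%:R)^-1 * ((sigma e st.1 st.2)%:R)^-1
          * ((sigma e' st.1 st.2)%:R)^-1,
       if (dist e' st.1 st.2 == dist e st.1 st.2)
          && (sigma e' st.1 st.2 == sigma e st.1 st.2) then p else q)
    | q <- spaths e' st.1 st.2]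
    | p <- spaths e st.1 st.2]
    | st <- ordered_pairs].

(* Probability, over r independent iterations, of the event
   "exists v, |c'_B(v) - c~'_B(v)| > eps", where c~'_B(v) is the fraction of
   the r paths of S' to which v is internal. *)
Definition prob_bad {R : realType} (e e' : rel T) (r : nat) (eps : R) : R :=
  let O := @step_outcomes R e e' in
  \sum_(f : {ffun 'I_r -> 'I_(size O)})
     (\prod_(i < r) (nth (0, [::]) O (f i)).1) *
     ([exists v : T,
        eps < `| betweenness e' v
                 - (r%:R)^-1 * \sum_(i < r)
                      (internal v (nth (0, [::]) O (f i)).2)%:R |] )%:R.

End Graphs.

Definition sample_size {R : realType} (c eps delta : R) (D : nat) : nat :=
  `| Num.ceil (c / eps ^+ 2 * ((trunc_log 2 (D - 2)).+1%:R + ln (delta^-1))) |%N.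

(* Main.v *)
Require Import Defs.
From HB Require Import structures.
From mathcomp Require Import all_boot all_order all_algebra.
From mathcomp Require Import all_classical all_reals all_analysis.
Import Order.TTheory GRing.Theory Num.Theory.
Local Open Scope ring_scope.
From mathcomp Require Import ring lra zify.

Section RealFacts.
Variable R : realType.

Lemma wexp (w a : R) : 1 <= w -> 1 <= a -> w * expR (- (a * w)) <= expR (- a).
Proof.
move=> hw ha.
have h1 : w <= expR (a * w - a).
  apply: le_trans (expR_ge1Dx _).
  have: 0 <= (a - 1) * (w - 1) by apply: mulr_ge0; lra.
  nra.
have -> : expR (- a) = expR (a * w - a) * expR (- (a * w)).
  by rewrite -expRD; congr expR; ring.
by apply: ler_wpM2r; [exact: expR_ge0|].
Qed.

Lemma exp_up (l : R) : 0 <= l -> l <= 1/4 -> expR l <= 1 + l + 2 * l ^+ 2.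
Proof.
move=> h0 h1.
have h2 : 1 - l <= expR (- l) by have := expR_ge1Dx (- l); lra.
have h3 : expR (- l) * expR l = 1 by rewrite -expRD addNr expR0.
have h4 := expR_ge0 l.
nra.
Qed.

Lemma exp_low (l : R) : 0 <= l -> expR (- l) <= 1 - l + l ^+ 2.
Proof.
move=> h0.
have h2 : 1 + l <= expR l by exact: expR_ge1Dx.
have h3 : expR (- l) * expR l = 1 by rewrite -expRD addNr expR0.
have h4 := expR_ge0 (- l).
nra.
Qed.
End RealFacts.
Section Exp.
Variables (R : realType) (n r : nat) (W : 'I_n -> R) (b : 'I_n -> bool).
Hypotheses (W0 : forall j, 0 <= W j) (W1 : \sum_j W j <= 1).
Definition xx (j : 'I_n) : R := (b j)%:R.
Definition mu : R := \sum_j W j * xx j.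
Definition Ex (g : {ffun 'I_r -> 'I_n} -> R) : R :=
  \sum_(f : {ffun 'I_r -> 'I_n}) (\prod_(i < r) W (f i)) * g f.
Definition SS (f : {ffun 'I_r -> 'I_n}) : R := \sum_(i < r) xx (f i).

Lemma Ex_le g h : (forall f, g f <= h f) -> Ex g <= Ex h.
Proof.
move=> gh; apply: ler_sum => f _; apply: ler_wpM2l => //.
by apply: prodr_ge0 => i _.
Qed.

Lemma ExZ c g : Ex (fun f => c * g f) = c * Ex g.
Proof. rewrite /Ex mulr_sumr; apply: eq_bigr => f _; ring. Qed.

Lemma Ex_sum (I : finType) (G : I -> {ffun 'I_r -> 'I_n} -> R) :
  Ex (fun f => \sum_i G i f) = \sum_i Ex (G i).
Proof.
rewrite /Ex exchange_big /=; apply: eq_bigr => f _; by rewrite mulr_sumr.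
Qed.

Lemma Ex_prod (F : 'I_r -> 'I_n -> R) :
  Ex (fun f => \prod_i F i (f i)) = \prod_i \sum_j W j * F i j.
Proof.
rewrite bigA_distr_bigA /Ex; apply: eq_bigr => f _.
by rewrite big_split.
Qed.

Lemma xx01 j : xx j = 0 \/ xx j = 1.
Proof. by rewrite /xx; case: (b j); [right|left]. Qed.

Lemma xx_ge0 j : 0 <= xx j.
Proof. by case: (xx01 j) => ->. Qed.

Lemma expxx l j : expR (l * xx j) = 1 + xx j * (expR l - 1).
Proof. by case: (xx01 j) => ->; rewrite ?mulr0 ?mul0r ?expR0 ?addr0 ?mulr1 ?mul1r //; ring. Qed.

Lemma mu_ge0 : 0 <= mu.
Proof. by apply: sumr_ge0 => j _; apply: mulr_ge0. Qed.

Lemma mu_le1 : mu <= 1.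
Proof.
apply: le_trans W1; apply: ler_sum => j _.
have := W0 j; case: (xx01 j) => ->; lra.
Qed.

Definition mgf (l : R) : R := \sum_j W j * expR (l * xx j).

Lemma mgf_ge0 l : 0 <= mgf l.
Proof. by apply: sumr_ge0 => j _; apply: mulr_ge0 => //; exact: expR_ge0. Qed.

Lemma mgf_le l : mgf l <= expR (mu * (expR l - 1)).
Proof.
apply: le_trans (expR_ge1Dx _).
rewrite /mgf /mu.
under eq_bigr do rewrite expxx.
rewrite mulr_suml.
have -> : \sum_j W j * (1 + xx j * (expR l - 1)) =
   \sum_j W j + \sum_j W j * xx j * (expR l - 1).
  by rewrite -big_split /=; apply: eq_bigr => j _; ring.
by rewrite lerD2r.
Qed.

Lemma Ex_exp l : Ex (fun f => expR (l * SS f)) <= expR (r%:R * (mu * (expR l - 1))).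
Proof.
have -> : Ex (fun f => expR (l * SS f)) = Ex (fun f => \prod_i expR (l * xx (f i))).
  by congr Ex; apply: funext => f; rewrite /SS mulr_sumr expR_sum.
rewrite (Ex_prod (fun i j => expR (l * xx j))).
rewrite expRM_natl.
have -> : \prod_(i < r) \sum_j W j * expR (l * xx j) = (mgf l) ^+ r.
  by rewrite prodr_const card_ord.
apply: lerXn2r; rewrite ?nnegrE ?mgf_ge0 ?expR_ge0 //.
exact: mgf_le.
Qed.

Lemma Ex_Sexp l : 0 <= l ->
  Ex (fun f => SS f * expR (l * SS f)) <=
  r%:R * (expR l * mu) * expR (r%:R * (mu * (expR l - 1))).
Proof.
move=> l0.
set M := expR (mu * (expR l - 1)).
have M1 : 1 <= M.
  rewrite /M; apply: le_trans (expR_ge1Dx _); rewrite lerDl.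
  apply: mulr_ge0; first exact: mu_ge0.
  have := expR_ge1Dx l; lra.
have -> : Ex (fun f => SS f * expR (l * SS f)) =
   Ex (fun f => \sum_(i0 < r) \prod_k (expR (l * xx (f k)) * (if k == i0 then xx (f k) else 1))).
  congr Ex; apply: funext => f.
  rewrite /SS mulr_suml; apply: eq_bigr => i0 _.
  rewrite big_split /= mulr_sumr expR_sum mulrC; congr (_ * _).
  by rewrite -big_mkcond big_pred1_eq.
rewrite Ex_sum.
have -> : r%:R * (expR l * mu) * expR (r%:R * (mu * (expR l - 1))) =
   \sum_(i0 < r) (expR l * mu) * M ^+ r.
  rewrite sumr_const card_ord /M expRM_natl -[in RHS]mulr_natl; ring.
apply: ler_sum => i0 _.
rewrite (Ex_prod (fun k j => expR (l * xx j) * (if k == i0 then xx j else 1))) (bigD1 i0) //= eqxx.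
have -> : \sum_j W j * (expR (l * xx j) * xx j) = expR l * mu.
  rewrite /mu mulr_sumr; apply: eq_bigr => j _.
  by case: (xx01 j) => ->; rewrite ?mulr0 ?mulr1 ?expR0; ring.
apply: ler_wpM2l.
  by apply: mulr_ge0; [exact: expR_ge0|exact: mu_ge0].
apply: (@le_trans _ _ (\prod_(k | k != i0) M)).
  apply: ler_prod => k /negbTE ->.
  under eq_bigr do rewrite mulr1.
  by rewrite mgf_ge0 mgf_le.
have -> : M ^+ r = \prod_(k < r) M by rewrite prodr_const card_ord.
rewrite [X in _ <= X](bigD1 i0) //=.
rewrite -[X in X <= _]mul1r; apply: ler_wpM2r => //.
by apply: prodr_ge0 => k _; apply: le_trans M1.
Qed.
End Exp.
Section Tails.
Variables (R : realType) (n r : nat) (W : 'I_n -> R) (b : 'I_n -> bool).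
Hypotheses (W0 : forall j, 0 <= W j) (W1 : \sum_j W j <= 1).
Variable eps : R.
Hypotheses (r0 : (0 < r)%N) (e0 : 0 < eps) (e1 : eps < 1)
  (ry : 16 <= r%:R * eps ^+ 2).

Local Notation mu := (@mu R n W b).
Local Notation SS := (@SS R n r b).
Local Notation Ex := (@Ex R n r W).

Lemma SS_ge0 f : 0 <= SS f.
Proof. by apply: sumr_ge0 => i _; exact: xx_ge0. Qed.

Lemma up_tail :
  Ex (fun f => ((r%:R * (mu + eps) < SS f)%R : bool)%:R) <=
  mu * expR (- (r%:R * eps ^+ 2 / 16)).
Proof.
have e0' := e0; have e1' := e1; have ry' := ry.
have mu0 : 0 <= mu by apply: mu_ge0.
have mu1 : mu <= 1 by apply: mu_le1.
have rpos : 0 < r%:R :> R by rewrite ltr0n.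
set y := r%:R * eps ^+ 2.
set u := mu + eps.
have u0 : 0 < u.
 rewrite /u; lra.
have u2 : u <= 2 by rewrite /u; lra.
set a := r%:R * u.
have a0 : 0 < a by apply: mulr_gt0.
set l := eps / (4 * u).
have l0 : 0 <= l by rewrite /l; apply: divr_ge0; lra.
have lu : l * (4 * u) = eps by rewrite /l mulfVK //; lra.
have l1 : l <= 1/4.
  rewrite /l ler_pdivrMr; last lra.
  rewrite /u; lra.
have ela0 : 0 < a * expR (l * a) by apply: mulr_gt0 => //; exact: expR_gt0.
apply: (@le_trans _ _ (Ex (fun f => (a * expR (l * a))^-1 * (SS f * expR (l * SS f))))).
  apply: Ex_le => // f.
  case: (boolP (a < SS f)) => h /=.
    rewrite ler_pdivlMl // mulr1.
    apply: ler_pM; [lra|exact: expR_ge0|lra|].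
    by rewrite ler_expR; apply: ler_wpM2l => //; lra.
  apply: mulr_ge0; first by rewrite invr_ge0; lra.
  by apply: mulr_ge0; [exact: SS_ge0|exact: expR_ge0].
rewrite ExZ.
apply: (@le_trans _ _ ((a * expR (l * a))^-1 *
   (r%:R * (expR l * mu) * expR (r%:R * (mu * (expR l - 1)))))).
  apply: ler_wpM2l; first by rewrite invr_ge0; lra.
  exact: Ex_Sexp.
have el := @exp_up _ l l0 l1.
have el2 : expR l <= 2 by nra.
set w := 2 / u.
have w1 : 1 <= w by rewrite /w ler_pdivlMr //; lra.
have wu : w * u = 2 by rewrite /w mulfVK //; lra.
have hA : r%:R * (mu * (expR l - 1)) - l * a <= - (y / 16 * w).
  have h1 : mu * (expR l - 1) <= mu * (l + 2 * l ^+ 2) by apply: ler_wpM2l => //; lra.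
  have h2 : mu * (l + 2 * l ^+ 2) - l * u <= - (eps ^+ 2 / 16 * w).
    have h3 : eps ^+2 / 16 * w = l * eps / 2 * (w * u) / 2.
      by rewrite -lu; field; lra.
    rewrite h3 wu.
    have k1 : mu * (2 * l) <= eps / 2.
      have : mu <= u by rewrite /u; lra.
      rewrite -lu; nra.
    have hu : u = mu + eps by [].
    rewrite hu; nra.
  have : r%:R * (mu * (expR l - 1)) - l * a <= r%:R * (mu * (l + 2 * l ^+ 2) - l * u).
    rewrite /a; nra.
  have : r%:R * (mu * (l + 2 * l ^+ 2) - l * u) <= r%:R * (- (eps ^+ 2 / 16 * w)).
    by apply: ler_wpM2l; lra.
  rewrite /y. nra.
have hw := @wexp R w (y / 16) w1 (ltac:(rewrite /y; lra)).
have -> : (a * expR (l * a))^-1 * (r%:R * (expR l * mu) * expR (r%:R * (mu * (expR l - 1))))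
  = mu * (expR l / u) * expR (r%:R * (mu * (expR l - 1)) - l * a).
  rewrite expRD expRN /a; field.
  by rewrite !gt_eqF ?expR_gt0 ?ltr0n.
rewrite -mulrA; apply: ler_wpM2l => //.
apply: (@le_trans _ _ (w * expR (- (y / 16 * w)))); last first.
  exact: hw.
apply: ler_pM.
- by apply: divr_ge0; [exact: expR_ge0|lra].
- exact: expR_ge0.
- by rewrite /w ler_pM2r ?invr_gt0.
- by rewrite ler_expR.
Qed.

Lemma low_tail :
  Ex (fun f => ((SS f < r%:R * (mu - eps))%R : bool)%:R) <=
  mu * expR (- (r%:R * eps ^+ 2 / 16)).
Proof.
have e0' := e0; have e1' := e1; have ry' := ry.
have mu0 : 0 <= mu by apply: mu_ge0.
have mu1 : mu <= 1 by apply: mu_le1.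
have rpos : 0 < r%:R :> R by rewrite ltr0n.
set y := r%:R * eps ^+ 2.
have ey : 0 <= expR (- (y / 16)) := expR_ge0 _.
case: (lerP mu eps) => hme.
  apply: (@le_trans _ _ (Ex (fun f => 0 * 0))).
    apply: Ex_le => // f; case: (boolP (SS f < r%:R * (mu - eps))) => h /=; last by rewrite mul0r.
    have := SS_ge0 f; have : r%:R * (mu - eps) <= 0 by nra.
    lra.
  rewrite ExZ mul0r. by apply: mulr_ge0.
set bb := r%:R * (mu - eps).
set l := eps / (2 * mu).
have m0 : 0 < mu by lra.
have lm : l * (2 * mu) = eps by rewrite /l mulfVK //; lra.
have l0 : 0 <= l by rewrite /l; apply: divr_ge0; lra.
apply: (@le_trans _ _ (Ex (fun f => expR (l * bb) * expR ((- l) * SS f)))).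
  apply: Ex_le => // f.
  case: (boolP (SS f < bb)) => h /=.
    rewrite -expRD -expR0 ler_expR. nra.
  by apply: mulr_ge0; exact: expR_ge0.
rewrite ExZ.
apply: (@le_trans _ _ (expR (l * bb) * expR (r%:R * (mu * (expR (- l) - 1))))).
  by apply: ler_wpM2l; [exact: expR_ge0|exact: Ex_exp].
rewrite -expRD.
set w := mu^-1.
have w1 : 1 <= w by rewrite /w -invr1 lef_pV2 ?posrE //; lra.
have wm : w * mu = 1 by rewrite /w mulVf //; lra.
have hA : l * bb + r%:R * (mu * (expR (- l) - 1)) <= - (y / 4 * w).
  have el := @exp_low _ l l0.
  have h1 : mu * (expR (- l) - 1) <= mu * (- l + l ^+ 2) by apply: ler_wpM2l => //; lra.
  have h2 : l * (mu - eps) + mu * (- l + l ^+ 2) <= - (eps ^+ 2 / 4 * w).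
    have h3 : eps ^+ 2 / 4 * w = l * eps / 2 * (w * mu) by rewrite -lm; field; lra.
    rewrite h3 wm -lm; nra.
  have : l * bb + r%:R * (mu * (expR (- l) - 1)) <= r%:R * (l * (mu - eps) + mu * (- l + l ^+ 2)).
    rewrite /bb; nra.
  have : r%:R * (l * (mu - eps) + mu * (- l + l ^+ 2)) <= r%:R * (- (eps ^+ 2 / 4 * w)).
    by apply: ler_wpM2l; lra.
  rewrite /y; nra.
have hw := @wexp R w (y / 4) w1 (ltac:(rewrite /y; lra)).
apply: (@le_trans _ _ (expR (- (y / 4 * w)))); first by rewrite ler_expR.
have -> : expR (- (y / 4 * w)) = mu * (w * expR (- (y / 4 * w))).
  by rewrite mulrA (mulrC mu) wm mul1r.
apply: ler_wpM2l => //.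
apply: le_trans hw _; rewrite ler_expR; rewrite /y; lra.
Qed.
End Tails.
Lemma prob_main (R : realType) (T : finType) (n r k : nat) (W : 'I_n -> R)
  (B : T -> 'I_n -> bool) (m : T -> R) (eps : R) :
  (forall j, 0 <= W j) -> \sum_j W j <= 1 ->
  (forall v, m v = \sum_j W j * (B v j)%:R) ->
  (forall j, \sum_v ((B v j)%:R : R) <= k%:R) ->
  (0 < r)%N -> 0 < eps -> eps < 1 -> 16 <= r%:R * eps ^+ 2 ->
  \sum_(f : {ffun 'I_r -> 'I_n}) (\prod_(i < r) W (f i)) *
     ([exists v, eps < `|m v - (r%:R)^-1 * \sum_(i < r) (B v (f i))%:R|])%:R
  <= 2 * k%:R * expR (- (r%:R * eps ^+ 2 / 16)).
Proof.
move=> W0 W1 hm hk r0 e0 e1 ry.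
have rpos : 0 < r%:R :> R by rewrite ltr0n.
set E := expR _.
have E0 : 0 <= E := expR_ge0 _.
pose up v f : R := ((r%:R * (@mu R n W (B v) + eps) < @SS R n r (B v) f)%R : bool)%:R.
pose lo v f : R := ((@SS R n r (B v) f < r%:R * (@mu R n W (B v) - eps))%R : bool)%:R.
apply: (@le_trans _ _ (@Ex R n r W (fun f => \sum_v (up v f + lo v f)))).
  apply: Ex_le => // f.
  case: (boolP [exists v, _]) => /= [/existsP [v hv]|_]; last first.
    by apply: sumr_ge0 => v _; apply: addr_ge0; exact: ler0n.
  rewrite (bigD1 v) //= -[X in X <= _]addr0.
  apply: lerD; last by apply: sumr_ge0 => v' _; apply: addr_ge0; exact: ler0n.
  have hmu : @mu R n W (B v) = m v by rewrite hm.
  rewrite /up /lo hmu.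
  have -> : @SS R n r (B v) f = \sum_(i < r) (B v (f i))%:R by [].
  move: hv; set S := \sum_(i < r) _.
  have hS : S = r%:R * (r%:R^-1 * S) by rewrite mulrA mulfV ?mul1r // gt_eqF.
  rewrite ltr_normr => /orP [] h.
    have : S < r%:R * (m v - eps).
      by rewrite [X in X < _]hS ltr_pM2l //; lra.
    move=> ->; set c := (_ < _)%R; have := ler0n R c; rewrite /=; lra.
  have : r%:R * (m v + eps) < S.
    by rewrite [X in _ < X]hS ltr_pM2l //; lra.
  move=> ->; set c := (_ < _)%R; have := ler0n R c; rewrite /=; lra.
rewrite Ex_sum.
apply: (@le_trans _ _ (\sum_v 2 * (m v * E))).
  apply: ler_sum => v _.
  have -> : @Ex R n r W (fun f => up v f + lo v f) =
     @Ex R n r W (up v) + @Ex R n r W (lo v).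
    by rewrite /Ex -big_split /=; apply: eq_bigr => f _; rewrite mulrDr.
  rewrite hm mulr2n mulrDl mul1r.
  apply: lerD; [exact: up_tail | exact: low_tail].
rewrite -mulr_sumr -mulrA; apply: ler_wpM2l => //.
rewrite -mulr_suml; apply: ler_wpM2r => //.
apply: (@le_trans _ _ (\sum_j W j * k%:R)).
  under eq_bigr do rewrite hm.
  rewrite exchange_big /=; apply: ler_sum => j _.
  by rewrite -mulr_sumr; apply: ler_wpM2l.
by rewrite -mulr_suml -[X in _ <= X]mul1r; apply: ler_wpM2r.
Qed.
Lemma final_arith (R : realType) (eps delta : R) (D : nat) :
  0 < eps -> eps < 1 -> 0 < delta -> delta < 1 ->
  let r := sample_size 32 eps delta D in
  [/\ (0 < r)%N, 16 <= r%:R * eps ^+ 2 &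
      2 * (D - 2)%N%:R * expR (- (r%:R * eps ^+ 2 / 16)) < delta].
Proof.
move=> e0 e1 d0 d1 r.
set L : R := (trunc_log 2 (D - 2)).+1%:R.
set Ld : R := ln (delta^-1).
have L1 : 1 <= L by rewrite /L ler1n.
have Ld0 : 0 < Ld.
  rewrite /Ld lnV ?posrE // oppr_gt0; apply: ln_lt0; lra.
set X := 32 / eps ^+ 2 * (L + Ld).
have e20 : 0 < eps ^+ 2 by apply: exprn_gt0.
have X0 : 0 < X by apply: mulr_gt0; [apply: divr_gt0|]; lra.
have rX : X <= r%:R.
  rewrite /r /sample_size -/L -/Ld -/X natr_absz gtr0_norm; first exact: ceil_ge.
  by rewrite ceil_gt0.
have rpos : 0 < r%:R :> R by lra.
have hy : 32 * (L + Ld) <= r%:R * eps ^+ 2.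
  have -> : 32 * (L + Ld) = X * eps ^+ 2 by rewrite /X; field; lra.
  by apply: ler_wpM2r; lra.
split.
- by rewrite -(ltr0n R).
- lra.
have hE : expR (- (r%:R * eps ^+ 2 / 16)) <= expR (- L) ^+ 2 * delta ^+ 2.
  have -> : delta = expR (- Ld) by rewrite /Ld lnV ?posrE // opprK lnK // posrE.
  rewrite -!expRM_natl -expRD ler_expR; lra.
have e1g : 2 <= expR 1 :> R by have := expR_ge1Dx (1 : R); lra.
have hk : (D - 2)%N%:R <= expR L :> R.
  have := trunc_log_ltn (D - 2) (isT : 1 < 2)%N.
  move=> /ltnW; rewrite -(ler_nat R) natrX => h.
  apply: le_trans h _.
  rewrite /L -[X in _ <= expR X]mulr1 expRM_natl.
  by apply: lerXn2r; rewrite ?nnegrE //; lra.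
have eL : expR L * expR (- L) = 1 by rewrite -expRD subrr expR0.
have eL1 : expR (- L) <= 1 / 2.
  have : expR 1 <= expR L by rewrite ler_expR.
  have := expR_gt0 (- L); nra.
have k0 : 0 <= (D - 2)%N%:R :> R := ler0n _ _.
have eLp := expR_gt0 (- L).
have eLp' := expR_gt0 L.
apply: (@le_lt_trans _ _ (2 * (D - 2)%N%:R * (expR (- L) ^+ 2 * delta ^+ 2))).
  by apply: ler_wpM2l => //; apply: mulr_ge0.
have h1 : (D - 2)%N%:R * expR (- L) <= 1 by nra.
have h2 : (D - 2)%N%:R * expR (- L) ^+ 2 <= 1 / 2.
  rewrite expr2 mulrA.
  apply: le_trans eL1; rewrite -[X in _ <= X]mul1r; apply: ler_wpM2r; lra.
have h3 : 0 < delta ^+ 2 by apply: exprn_gt0.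
have h4 : delta ^+ 2 < delta by rewrite expr2; nra.
have -> : 2 * (D - 2)%N%:R * (expR (- L) ^+ 2 * delta ^+ 2) =
   2 * ((D - 2)%N%:R * expR (- L) ^+ 2) * delta ^+ 2 by ring.
nra.
Qed.
Section G.
Variable R : realType.
Variable T : finType.
Implicit Types (e : rel T) (s t : T).

Lemma sum_const_seq (A : Type) (l : seq A) (c : R) :
  \sum_(x <- l) c = (size l)%:R * c.
Proof.
elim: l => [|x l IH]; first by rewrite big_nil mul0r.
by rewrite big_cons IH /= -add1n natrD mulrDl mul1r.
Qed.

Lemma sum_count (A : Type) (l : seq A) (a : pred A) :
  \sum_(x <- l) ((a x)%:R : R) = (count a l)%:R.
Proof.
elim: l => [|x l IH]; first by rewrite big_nil.
by rewrite big_cons IH /= natrD.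
Qed.

Lemma all_flatten (A : Type) (a : pred A) (ss : seq (seq A)) :
  all a (flatten ss) = all (all a) ss.
Proof. by elim: ss => //= s ss IH; rewrite all_cat IH. Qed.

Lemma sum_ind (P : pred T) : \sum_v ((P v)%:R : R) = #|P|%:R.
Proof.
rewrite -sumr_const [RHS]big_mkcond /=; apply: eq_bigr => v _.
have -> : (v \in P) = P v by [].
by case: (P v).
Qed.

Lemma mem_spaths e s t p : p \in spaths e s t ->
  exists w, [/\ p = s :: w, size w = dist e s t & walk_of e s t w].
Proof.
rewrite /spaths => /mapP [w]; rewrite mem_enum => hw ->.
by exists (tval w); rewrite size_tuple.
Qed.

Lemma spathsI e s t w : size w = dist e s t -> walk_of e s t w ->
  (s :: w) \in spaths e s t.
Proof.
move=> hs hw; have hs' : size w == dist e s t by apply/eqP.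
by apply/mapP; exists (Tuple hs') => //; rewrite mem_enum.
Qed.

Lemma uniq_spaths e s t : uniq (spaths e s t).
Proof.
rewrite /spaths map_inj_in_uniq ?enum_uniq // => w1 w2 _ _ [] h.
exact: val_inj.
Qed.

Lemma spaths_headlast e s t p x : p \in spaths e s t ->
  head x p = s /\ last x p = t.
Proof. by case/mem_spaths => w [-> _ /andP [_ /eqP <-]]. Qed.

Lemma conn_dist e s t : connect e s t ->
  has_walk e s t (dist e s t) /\ (dist e s t < #|T|)%N.
Proof.
move/connectP => [p hp ->].
case/shortenP: hp => p' hp' hu _.
have hsz : (size p' < #|T|)%N.
  have := max_card (mem (s :: p')).
  by rewrite (card_uniqP hu).
have hw : has_walk e s (last s p') (size p').
  by apply/existsP; exists (in_tuple p'); rewrite /walk_of hp' eqxx.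
have hhas : has (has_walk e s (last s p')) (iota 0 #|T|).
  by apply/hasP; exists (size p') => //; rewrite mem_iota.
have hlt : (dist e s (last s p') < #|T|)%N.
  by rewrite /dist -[X in (_ < X)%N](size_iota 0 #|T|) -has_find.
split=> //.
have := nth_find 0 hhas; rewrite nth_iota ?add0n //.
Qed.

Lemma dist_le e s t k : has_walk e s t k -> (k < #|T|)%N -> (dist e s t <= k)%N.
Proof.
move=> hw hk; rewrite leqNgt; apply/negP => /(before_find 0).
by rewrite nth_iota // add0n hw.
Qed.

Lemma sigma_pos e s t : connect e s t -> (0 < sigma e s t)%N.
Proof.
case/conn_dist => /existsP [w hw] _.
have := spathsI e s t w (size_tuple w) hw.
by rewrite /sigma; case: (spaths e s t).
Qed.

Lemma walk_sub e e' s t w : subrel e e' -> walk_of e s t w -> walk_of e' s t w.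
Proof. by move=> sub /andP [hp hl]; rewrite /walk_of (sub_path sub hp) hl. Qed.

Lemma dist_sub e e' s t : subrel e e' -> connect e s t ->
  (dist e' s t <= dist e s t)%N.
Proof.
move=> sub /conn_dist [/existsP [w hw] hlt].
apply: dist_le => //; apply/existsP; exists w; exact: walk_sub hw.
Qed.

Lemma dist_VD e s t : (dist e s t < VD e)%N.
Proof.
rewrite /VD; apply: leq_trans (leq_bigmax s).
exact: (leq_bigmax (F := fun t => (dist e s t).+1) t).
Qed.

Lemma internal_bound (x : T) w :
  \sum_v ((internal v (x :: w))%:R : R) <= ((size w).-1)%:R.
Proof.
case/lastP: w => [|w' y].
  rewrite big1 // => v _.
  by rewrite /internal /= mem_seq1; case: eqP.
rewrite size_rcons /=.
apply: (@le_trans _ _ (\sum_v ((v \in w')%:R : R))).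
  apply: ler_sum => v _.
  case hi: (internal v (x :: rcons w' y)); last by rewrite ler0n.
  move: hi; rewrite /internal /= last_rcons in_cons mem_rcons in_cons.
  case/and3P => h1 h2 h3; move: h1; rewrite (negbTE h2) (negbTE h3) /=.
  by move=> ->.
rewrite (sum_ind (fun v => v \in w')) ler_nat.
exact: card_size.
Qed.

Lemma sigmav0 e s t v : (s == v) || (t == v) -> sigmav e s t v = 0%N.
Proof.
move=> h; rewrite /sigmav; apply/eqP; rewrite -leqn0 leqNgt -has_count.
apply/hasPn => p hp.
case: (@spaths_headlast e s t p v hp) => hh hl.
rewrite /internal hh hl.
by case/orP: h => /eqP ->; rewrite eqxx /= ?andbF.
Qed.

Lemma count_same e e' s t (a : pred (seq T)) : subrel e e' ->
  dist e' s t = dist e s t -> sigma e' s t = sigma e s t ->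
  count a (spaths e s t) = count a (spaths e' s t).
Proof.
move=> sub hd hs.
have hsub : {subset spaths e s t <= spaths e' s t}.
  move=> p /mem_spaths [w [-> hw hwk]].
  by apply: spathsI; [rewrite hd|exact: walk_sub hwk].
have [_ eqi] := uniq_min_size (uniq_spaths e s t) hsub (eq_leq hs).
have hp := uniq_perm (uniq_spaths e s t) (uniq_spaths e' s t) eqi.
by move/permP: hp => ->.
Qed.
End G.
Section G2.
Variable R : realType.
Variable T : finType.
Variables e e' : rel T.
Hypotheses (sub : subrel e e') (conn : connected_graph e).

Definition NN : R := (#|T| * (#|T| - 1))%:R.
Definition wt (st : T * T) : R := NN^-1 * ((sigma e st.1 st.2)%:R)^-1 * ((sigma e' st.1 st.2)%:R)^-1.
Definition cnd (st : T * T) := (dist e' st.1 st.2 == dist e st.1 st.2) && (sigma e' st.1 st.2 == sigma e st.1 st.2).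

Lemma sum_O (H : R * seq T -> R) :
  \sum_(x <- @step_outcomes T R e e') H x =
  \sum_(st <- ordered_pairs T) \sum_(p <- spaths e st.1 st.2)
     \sum_(q <- spaths e' st.1 st.2) H (wt st, if cnd st then p else q).
Proof.
rewrite /step_outcomes big_flatten big_map; apply: eq_bigr => st _.
rewrite big_flatten big_map; apply: eq_bigr => p _.
by rewrite big_map.
Qed.

Lemma sum_pairs (G : T * T -> R) :
  \sum_(st <- ordered_pairs T) G st = \sum_s \sum_(t | t != s) G (s, t).
Proof.
rewrite /ordered_pairs big_filter big_mkcond big_allpairs /=.
rewrite big_enum /=; apply: eq_bigr => s _.
rewrite big_enum /= [RHS]big_mkcond; apply: eq_bigr => t _.
by rewrite eq_sym.
Qed.

Lemma conn' s t : connect e' s t.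
Proof.
have h : subrel e (connect e') by move=> x y hxy; apply: connect1; exact: sub.
exact: (connect_sub h (conn s t)).
Qed.
End G2.
Section G3.
Variable R : realType.
Variable T : finType.
Variables e e' : rel T.
Hypotheses (sub : subrel e e') (conn : connected_graph e).
Local Notation NN := (@NN R T).
Local Notation wt := (@wt R T e e').
Local Notation cnd := (@cnd T e e').

Lemma sig_ne0 s t : (sigma e s t)%:R != 0 :> R.
Proof. by rewrite pnatr_eq0 -lt0n; apply: sigma_pos; apply: conn. Qed.

Lemma sig_ne0' s t : (sigma e' s t)%:R != 0 :> R.
Proof. by rewrite pnatr_eq0 -lt0n; apply: sigma_pos; exact: (@conn' T e e' sub conn s t). Qed.

Lemma pair_one s t :
  \sum_(p <- spaths e s t) \sum_(q <- spaths e' s t) wt (s, t) = NN^-1.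
Proof.
under eq_bigr do rewrite sum_const_seq.
rewrite sum_const_seq /wt /=.
have h1 := sig_ne0 s t; have h2 := sig_ne0' s t.
rewrite /sigma in h1 h2 *.
set c := NN^-1.
by field; rewrite ?h1 ?h2.
Qed.

Lemma pair_val s t v :
  \sum_(p <- spaths e s t) \sum_(q <- spaths e' s t)
     wt (s, t) * (internal v (if cnd (s, t) then p else q))%:R
  = NN^-1 * (sigmav e' s t v)%:R / (sigma e' s t)%:R.
Proof.
have h1 := sig_ne0 s t; have h2 := sig_ne0' s t.
case hc: (cnd (s, t)).
  move: hc => /andP [/eqP hd /eqP hs] /=.
  under eq_bigr do rewrite sum_const_seq.
  have -> : \sum_(p <- spaths e s t) (size (spaths e' s t))%:R * (wt (s, t) * (internal v p)%:R)
     = (size (spaths e' s t))%:R * wt (s, t) * (count (internal v) (spaths e s t))%:R.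
    by rewrite -sum_count mulr_sumr; apply: eq_bigr => p _; rewrite mulrA.
  rewrite (@count_same T e e' s t (internal v) sub hd hs) /sigmav /wt /= -/(sigma e' s t) hs.
  rewrite hs in h2.
  set c := NN^-1.
  by field; rewrite ?h1 ?h2.
have -> : \sum_(p <- spaths e s t) \sum_(q <- spaths e' s t)
     wt (s, t) * (internal v q)%:R
   = \sum_(p <- spaths e s t) wt (s, t) * (count (internal v) (spaths e' s t))%:R.
  by apply: eq_bigr => p _; rewrite -sum_count mulr_sumr.
rewrite sum_const_seq /sigmav /wt /= -/(sigma e s t).
set c := NN^-1.
by field; rewrite ?h1 ?h2.
Qed.
End G3.
Section G4.
Variable R : realType.
Variable T : finType.
Variables e e' : rel T.
Hypotheses (sub : subrel e e') (conn : connected_graph e).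
Local Notation NN := (@NN R T).
Local Notation wt := (@wt R T e e').
Local Notation cnd := (@cnd T e e').
Local Notation O := (@step_outcomes T R e e').

Lemma W_ge0 : all (fun x : R * seq T => 0 <= x.1) O.
Proof.
rewrite /step_outcomes all_flatten all_map; apply/allP => st _ /=.
rewrite all_flatten all_map; apply/allP => p _ /=.
rewrite all_map; apply/allP => q _ /=.
by rewrite !mulr_ge0 // invr_ge0 ler0n.
Qed.

Lemma sum_neq (c : R) (s : T) : \sum_(t | t != s) c = c *+ #|T|.-1.
Proof. by rewrite -(cardC1 s) -sumr_const; apply: eq_bigl => t; rewrite !inE. Qed.

Lemma sumW : \sum_(x <- O) x.1 <= 1.
Proof.
rewrite sum_O sum_pairs.
have -> : \sum_s \sum_(t | t != s) \sum_(p <- spaths e (s, t).1 (s, t).2)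
    \sum_(q <- spaths e' (s, t).1 (s, t).2) (wt (s, t), if cnd (s, t) then p else q).1
   = \sum_(s : T) \sum_(t | t != s) NN^-1.
  apply: eq_bigr => s _; apply: eq_bigr => t _.
  exact: (@pair_one R T e e' sub conn s t).
under eq_bigr do rewrite sum_neq.
rewrite sumr_const -mulrnA -mulr_natr.
have -> : (#|T|.-1 * #|T|)%N = (#|T| * (#|T| - 1))%N by rewrite subn1 mulnC.
rewrite mulrC.
case: (eqVneq NN 0) => h.
  by rewrite /NN in h *; rewrite h invr0 mulr0.
by rewrite /NN in h *; rewrite mulfV.
Qed.

Lemma betw v : betweenness e' v = \sum_(x <- O) x.1 * (internal v x.2)%:R.
Proof.
rewrite sum_O sum_pairs.
pose f s t : R := (sigmav e' s t v)%:R / (sigma e' s t)%:R.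
have f0 : forall s t, (s == v) || (t == v) -> f s t = 0.
  by move=> s t h; rewrite /f sigmav0 // mul0r.
transitivity (\sum_s \sum_(t | t != s) NN^-1 * f s t); last first.
  apply: eq_bigr => s _; apply: eq_bigr => t _.
  by rewrite /f mulrA -(@pair_val R T e e' sub conn s t v).
rewrite /betweenness -/NN (big_mkcond (fun s => s != v)) mulr_sumr.
apply: eq_bigr => s _.
case: (eqVneq s v) => [->|hsv] /=.
  by rewrite mulr0 big1 // => t _; rewrite f0 ?eqxx // mulr0.
rewrite mulr_sumr (big_mkcond (fun t => (t != v) && (t != s))) [RHS]big_mkcond.
apply: eq_bigr => t _.
case: (eqVneq t v) => [->|htv] /=.
  by rewrite eq_sym hsv f0 ?eqxx ?orbT // mulr0.
by [].
Qed.

Lemma internal_O (D : nat) : (VD e <= D)%N ->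
  all (fun x : R * seq T => \sum_v ((internal v x.2)%:R : R) <= (D - 2)%N%:R) O.
Proof.
move=> hD.
have key : forall (g : rel T) s t p, p \in spaths g s t -> (dist g s t <= dist e s t)%N ->
    \sum_v ((internal v p)%:R : R) <= (D - 2)%N%:R.
  move=> g s t p /mem_spaths [w [-> hw _]] hle.
  apply: le_trans (@internal_bound R T s w) _.
  rewrite ler_nat hw.
  have hV := @dist_VD T e s t.
  move: hle hV hD; set a := dist g s t; set b := dist e s t; set c := VD e.
  clear; move=> *; lia.
rewrite /step_outcomes all_flatten all_map; apply/allP => st _ /=.
rewrite all_flatten all_map; apply/allP => p hp /=.
rewrite all_map; apply/allP => q hq /=.
case: ifP => _.
  exact: (key _ _ _ _ hp (leqnn _)).
apply: (key _ _ _ _ hq).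
exact: (@dist_sub T e e' st.1 st.2 sub (conn st.1 st.2)).
Qed.
End G4.

Theorem theorem1 (R : realType) :
  exists c : R, 0 < c /\
  forall (T : finType) (e e' : rel T) (D : nat) (eps delta : R),
    simple_graph e -> simple_graph e' -> subrel e e' ->
    connected_graph e ->
    (VD e <= D)%N ->
    0 < eps < 1 -> 0 < delta < 1 ->
    prob_bad e e' (sample_size c eps delta D) eps < delta.
Proof.
exists 32; split; first lra.
move=> T e e' D eps delta _ _ sub conn hD /andP [e0 e1] /andP [d0 d1].
have := @final_arith R eps delta D e0 e1 d0 d1.
move=> /= [r0 ry hfin].
rewrite /prob_bad /=.
apply: le_lt_trans hfin.
set O := @step_outcomes T R e e'.
have sn : forall F : R * seq T -> R,
    \sum_(j < size O) F (nth (0, [::]) O j) = \sum_(x <- O) F x.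
  by move=> F; rewrite (big_nth (0, [::])) big_mkord.
apply: (@prob_main R T (size O) (sample_size 32 eps delta D) (D - 2)
   (fun j => (nth (0, [::]) O j).1)
   (fun v j => internal v (nth (0, [::]) O j).2)
   (fun v => betweenness e' v) eps) => //.
- move=> j.
  exact: (all_nthP (0, [::]) (@W_ge0 R T e e') j (ltn_ord j)).
- have := sn (fun x => x.1); rewrite /= => ->.
  exact: (@sumW R T e e' sub conn).
- move=> v; symmetry.
  rewrite (@betw R T e e' sub conn v).
  exact: (sn (fun x => x.1 * (internal v x.2)%:R)).
- move=> j.
  exact: (all_nthP (0, [::]) (@internal_O R T e e' sub conn D hD) j (ltn_ord j)).
Qed.
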